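(* Let $\mathcal P=(P_1,\dots,P_k)$ be a hinge in $V=\mathbb C^n$ and fix $m\in\{0,1,\dots,n\}$. Consider the operators $\lambda^m(P_1),\dots,\lambda^m(P_k):\Lambda^mV\to\Lambda^mV$. Then exactly one of the following holds: (1) there is a unique $j$ with $\lambda^m(P_j)\neq0$; (2) there is $j$ such that $\lambda^m(P_j)\neq0$, $\lambda^m(P_{j+1})\ne0$ and $\lambda^m(P_t)=0$ for all $t\ne j,j+1$; in this case $\lambda^m(P_j)$ and $\lambda^m(P_{j+1})$ have rank $1$, coincide up to a nonzero factor, and also coincide (up to a nonzero factor) with $\lambda^m(Q_j)$, where $Q_j=\mathrm{Ker}\,P_j\oplus\mathrm{Im}\,P_j$.
   Context: A linear relation is a subspace $P\subset V\oplus V$. $\mathrm{Ker}\,P=\{v: v\oplus0\in P\}$, $\mathrm{Dom}\,P$ and $\mathrm{Im}\,P$ are the projections of $P$ to the first and second summands, $\mathrm{Indef}\,P=\{w:0\oplus w\in P\}$, $\mathrm{rk}\,P=\dim\mathrm{Dom}\,P-\dim\mathrm{Ker}\,P$. If $\dim P=n$, there exist bases $f_1,\dots,f_a,g_1,\dots,g_b,h_1,\dots,h_c$ and $F_1,\dots,F_a,G_1,\dots,G_b,H_1,\dots,H_c$ of $V$ such that $P$ is spanned by $0\oplus F_i$, $g_j\oplus G_j$, $h_k\oplus0$; $\lambda(P):\Lambda V\to\Lambda V$ sends $f_1\wedge\dots\wedge f_a\wedge g_{i_1}\wedge\dots\wedge g_{i_s}$ ($i_1<\dots<i_s$) to $F_1\wedge\dots\wedge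 F_a\wedge G_{i_1}\wedge\dots\wedge G_{i_s}$ and annihilates the other wedge monomials in the basis $f,g,h$; it is defined up to a nonzero scalar, and $\lambda^m(P)$ is its restriction to $\Lambda^mV$. A hinge is a sequence $(P_1,\dots,P_k)$ of $n$-dimensional linear relations such that $\mathrm{Ker}\,P_j=\mathrm{Dom}\,P_{j+1}$ and $\mathrm{Im}\,P_j=\mathrm{Indef}\,P_{j+1}$ for $1\le j\le k-1$, $\mathrm{Dom}\,P_1=V$, $\mathrm{Im}\,P_k=V$, and $\mathrm{rk}\,P_j>0$ for all $j$. *)

(* Defs.v *)
From HB Require Import structures.
From mathcomp Require Import all_boot all_order all_algebra.
From mathcomp Require Import reals complex.

Set Implicit Arguments.
Unset Strict Implicit.
Unset Printing Implicit Defensive.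

Import GRing.Theory Num.Theory.
Local Open Scope ring_scope.

(* Conventions: V = F^n is represented by row vectors 'rV[F]_n; V (+) V by
   'rV[F]_(n + n) with v (+) w = row_mx v w.  A linear relation P is given by
   a matrix P : 'M_(n + n) whose row space (mxalgebra, %MS) is the relation. *)

Section LinRel.
Variables (F : fieldType) (n : nat).

Definition DomMx (P : 'M[F]_(n + n)) : 'M[F]_(n + n, n) := lsubmx P.
Definition ImMx (P : 'M[F]_(n + n)) : 'M[F]_(n + n, n) := rsubmx P.
(* Ker P = { v | v (+) 0 \in P } *)
Definition KerMx (P : 'M[F]_(n + n)) : 'M[F]_(n + n, n) :=
  kermx (rsubmx P) *m lsubmx P.
(* Indef P = { w | 0 (+) w \in P } *)
Definition IndefMx (P : 'M[F]_(n + n)) : 'M[F]_(n + n, n) :=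
  kermx (lsubmx P) *m rsubmx P.

Definition rkrel (P : 'M[F]_(n + n)) : nat :=
  (\rank (DomMx P) - \rank (KerMx P))%N.

Definition KerImRel (P : 'M[F]_(n + n)) : 'M[F]_(n + n) :=
  (row_mx (KerMx P) 0 + row_mx 0 (ImMx P))%MS.

Definition hinge (k : nat) (P : nat -> 'M[F]_(n + n)) : Prop :=
  [/\ (0 < k)%N,
      (forall j, (1 <= j <= k)%N -> \rank (P j) = n /\ (0 < rkrel (P j))%N),
      (forall j, (1 <= j)%N -> (j < k)%N ->
          (KerMx (P j) == DomMx (P j.+1))%MS /\
          (ImMx (P j) == IndefMx (P j.+1))%MS),
      row_full (DomMx (P 1%N)) &
      row_full (ImMx (P k))].

(* Exterior power Lambda^m V: basis e_S, S an m-subset of 'I_n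
   (e_S = e_{s_1} /\ ... /\ e_{s_m}, s_1 < ... < s_m). *)
Definition msubsets (m : nat) : {set {set 'I_n}} :=
  [set S : {set 'I_n} | #|S| == m].

Definition extdim (m : nat) : nat := #|msubsets m|.

Definition subs (m : nat) (i : 'I_(extdim m)) : {set 'I_n} := enum_val i.

(* column selection matrix: column r is e_{s_r} where s_r is the r-th
   (0-based, increasing) element of S *)
Definition selmx (m : nat) (S : {set 'I_n}) : 'M[F]_(n, m) :=
  \matrix_(c, r) ((c \in S) && (#|[set c' in S | (c' < c)%N]| == r)%N)%:R.

(* m-th compound matrix: the matrix of Lambda^m of the endomorphism
   x |-> x *m B (row vector convention); its row S is the coordinate vector
   of the wedge of the rows of B indexed by S, in increasing order. *)
Definition compound (m : nat) (B : 'M[F]_n) : 'M[F]_(extdim m) :=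
  \matrix_(i, j) \det ((selmx m (subs i))^T *m B *m selmx m (subs j)).

Inductive lbl := Lf | Lg | Lh.
Definition lbl_eqb (x y : lbl) : bool :=
  match x, y with Lf, Lf | Lg, Lg | Lh, Lh => true | _, _ => false end.

(* Adapted bases: the rows of B are the basis f,g,h of V and the rows of B'
   are the basis F,G,H, with lab r telling to which family row r belongs
   (the families are ordered by increasing row index); P is spanned by
   0 (+) F_i, g_j (+) G_j, h_k (+) 0. *)
Definition adapted (P : 'M[F]_(n + n)) (B B' : 'M[F]_n) (lab : 'I_n -> lbl)
  : Prop :=
  [/\ B \in unitmx, B' \in unitmx &
      (P == \matrix_(r < n)
              row_mx (if lbl_eqb (lab r) Lf then 0 else row r B)
                     (if lbl_eqb (lab r) Lh then 0 else row r B'))%MS].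

(* basis monomials on which lambda(P) is nonzero: those containing all f's
   and no h *)
Definition admissible (lab : 'I_n -> lbl) (S : {set 'I_n}) : bool :=
  [forall r, lbl_eqb (lab r) Lf ==> (r \in S)] &&
  [forall r, lbl_eqb (lab r) Lh ==> (r \notin S)].

(* the matrix (in the basis e_S, row vector convention) of lambda^m(P)
   built from the adapted bases: it maps the wedge of rows S of B to the
   wedge of rows S of B' when S is admissible, and to 0 otherwise *)
Definition lambda_mx (m : nat) (B B' : 'M[F]_n) (lab : 'I_n -> lbl)
  : 'M[F]_(extdim m) :=
  invmx (compound m B) *m
  diag_mx (\row_i (admissible lab (subs i))%:R) *m compound m B'.

(* L is (a representative, defined up to nonzero scalar, of) lambda^m(P) *)
Definition is_lambda (m : nat) (P : 'M[F]_(n + n)) (L : 'M[F]_(extdim m))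
  : Prop :=
  exists B B' lab, adapted P B B' lab /\ L = lambda_mx m B B' lab.

Definition proportional (p : nat) (A C : 'M[F]_p) : Prop :=
  exists c : F, c != 0 /\ A = c *: C.

End LinRel.
Arguments is_lambda {F n} m P L.
Arguments lambda_mx {F n} m B B' lab.

(* Main.v *)
Require Import Defs.
From HB Require Import structures.
From mathcomp Require Import all_boot all_order all_fingroup all_algebra zify.
From mathcomp Require Import reals complex.
Set Implicit Arguments.
Unset Strict Implicit.
Unset Printing Implicit Defensive.
Import GRing.Theory Num.Theory.

Section Comb.
Variables (a b : nat -> nat) (k m : nat).
Hypotheses (hk : 0 < k) (a1 : a 1 = 0)
  (astep : forall j, 1 <= j -> j < k -> a j.+1 = a j + b j)
  (ak : m <= a k + b k) (bpos : forall j, 1 <= j <= k -> 0 < b j).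

Definition nz t := (a t <= m) && (m <= a t + b t).

Lemma mono s d : 1 <= s -> s + d <= k -> a s + d <= a (s + d).
Proof.
move=> hs; elim: d => [|d IH] hd; first by rewrite !addn0.
have hsd : s + d < k by rewrite -addnS.
have hs' : 1 <= s + d by rewrite (leq_trans hs (leq_addr _ _)).
have hb : 0 < b (s + d) by apply: bpos; rewrite hs' ltnW.
by rewrite !addnS astep // -addn1 leq_add // IH // ltnW.
Qed.

Lemma two s t : 1 <= s -> t <= k -> s < t -> nz s -> nz t ->
  t = s.+1 /\ m = a s + b s.
Proof.
move=> hs ht st /andP[s1 s2] /andP[t1 t2].
have hs1 : s.+1 <= k by exact: leq_trans st ht.
have e := astep hs hs1.
have := mono (d := t - s.+1) (ltn_trans hs (ltnSn s)) _ .
rewrite subnKC // => /(_ ht); rewrite e => h.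
have : a s + b s + (t - s.+1) <= m by exact: leq_trans h t1.
move=> h2; have h3 : t - s.+1 = 0.
  by apply/eqP; rewrite -leqn0 -(leq_add2l (a s + b s)) addn0 (leq_trans h2 s2).
split; first by apply/eqP; rewrite eqn_leq st andbT -subn_eq0 h3.
by apply/eqP; rewrite eqn_leq s2 /=; rewrite h3 addn0 in h2.
Qed.

Lemma ex_nz : exists t, 1 <= t <= k /\ nz t.
Proof.
suff H : forall d j, 1 <= j -> j + d = k -> a j <= m -> exists t, 1 <= t <= k /\ nz t.
  by apply: (H (k - 1) 1) => //; [rewrite subnKC | rewrite a1].
elim=> [|d IH] j hj e am.
  by exists j; rewrite addn0 in e; subst j; rewrite hj leqnn /nz am.
case: (leqP m (a j + b j)) => h.
  by exists j; rewrite hj /nz am h -e leq_addr.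
have jk : j < k by lia.
apply: (IH j.+1) => //; first by lia.
by rewrite astep //; lia.
Qed.

Lemma comb :
  (exists j, [/\ 1 <= j <= k, nz j & forall t, 1 <= t <= k -> nz t -> t = j]) \/
  (exists j, [/\ 1 <= j, j.+1 <= k, nz j, nz j.+1 &
      forall t, 1 <= t <= k -> nz t -> t = j \/ t = j.+1]).
Proof.
have [t [/andP[t1 tk] nt]] := ex_nz.
have C2 : forall s u, 1 <= s -> u <= k -> s < u -> nz s -> nz u ->
  exists j, [/\ 1 <= j, j.+1 <= k, nz j, nz j.+1 &
      forall t, 1 <= t <= k -> nz t -> t = j \/ t = j.+1].
  move=> s u s1 uk su ns nu; have [eu em] := two s1 uk su ns nu.
  subst u; exists s; split => // v /andP[v1 vk] nv.
  case: (ltngtP v s) => [vs|sv|->]; last by left.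
    have [es ev] := two v1 (ltnW (leq_trans (ltnSn s) uk)) vs nv ns.
    subst s; exfalso.
    have e1 : a v.+1 = a v + b v by apply: astep => //; lia.
    have hb : 0 < b v.+1 by apply: bpos; lia.
    lia.
  by right; have [] := two s1 vk sv ns nv.
case: (boolP (has (fun s => (s != t) && nz s) (iota 1 k))).
  case/hasP=> s; rewrite mem_iota add1n ltnS => /andP[s1 sk] /andP[st ns].
  right; case: (ltngtP s t) => [lt|lt|e]; last by rewrite e eqxx in st.
    exact: C2 s t s1 tk lt ns nt.
  exact: C2 t s t1 sk lt nt ns.
move=> hn; left; exists t; split => //; first by rewrite t1.
move=> s /andP[s1 sk] ns; apply/eqP; apply: contraNT hn => st.
by apply/hasP; exists s; rewrite ?mem_iota ?add1n ?ltnS ?s1 ?sk // st.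
Qed.

End Comb.

Local Open Scope ring_scope.


Section Sel.
Variables (F : fieldType) (n : nat).
Implicit Types U : {set 'I_n}.

Definition rk U (c : 'I_n) : nat := #|[set c' in U | (c' < c)%N]|.

Lemma rk_lt U c : c \in U -> (rk U c < #|U|)%N.
Proof.
move=> cU; apply: proper_card; apply/properP; split.
  by apply/subsetP=> x; rewrite inE => /andP[].
by exists c => //; rewrite inE ltnn andbF.
Qed.

Lemma rk_mono U (c1 c2 : 'I_n) : c2 \in U -> (c1 < c2)%N -> c1 \in U -> (rk U c1 < rk U c2)%N.
Proof.
move=> c2U lt c1U; apply: proper_card; apply/properP; split.
  apply/subsetP=> x; rewrite !inE => /andP[-> /= h]; exact: ltn_trans h lt.
by exists c1; rewrite !inE ?c1U ?lt // ltnn andbF.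
Qed.

Lemma rk_inj U : {in U &, injective (rk U)}.
Proof.
move=> c1 c2 h1 h2 e; apply/val_inj/eqP; case: ltngtP => // lt.
  by have := rk_mono h2 lt h1; rewrite e ltnn.
by have := rk_mono h1 lt h2; rewrite e ltnn.
Qed.

Lemma sel_ex U m : #|U| = m -> exists s : 'I_m -> 'I_n,
  (forall r, s r \in U) /\ forall c (r : 'I_m), ((c \in U) && (rk U c == r)) = (c == s r).
Proof.
move=> cU.
have H : forall r : 'I_m, exists c, (c \in U) && (rk U c == r).
  move=> r.
  pose h (c : 'I_n) : 'I_m := insubd r (rk U c).
  have hv c : c \in U -> val (h c) = rk U c.
    by move=> cu; rewrite /h val_insubd; have := rk_lt cu; rewrite cU => ->.
  have hinj : {in U &, injective h}.
    move=> c1 c2 u1 u2 e; apply: (rk_inj u1 u2); rewrite -(hv c1) // -(hv c2) // e //.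
  have : h @: U = setT.
    apply/eqP; rewrite eqEcard subsetT /= card_in_imset // cardsT card_ord cU //.
  move=> e; have : r \in h @: U by rewrite e inE.
  case/imsetP=> c cu ->; exists c; rewrite cu /= hv //.
have [s hs] := fin_all_exists H.
exists s; split; first by move=> r; case/andP: (hs r).
move=> c r; apply/idP/idP.
  case/andP=> cu /eqP e; case/andP: (hs r) => su /eqP e2.
  by apply/eqP; apply: (rk_inj cu su); rewrite e e2.
by move/eqP->; exact: hs.
Qed.

End Sel.

Section Sel2.
Variables (n : nat).
Lemma sel_onto (U : {set 'I_n}) m (s : 'I_m -> 'I_n) :
  #|U| = m ->
  (forall c (r : 'I_m), ((c \in U) && (rk U c == r)) = (c == s r)) ->
  forall c, c \in U -> exists r, c = s r.
Proof.
move=> cU hs c cu; have lt := rk_lt cu; rewrite cU in lt.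
exists (Ordinal lt); apply/eqP; rewrite -hs cu /=; exact: eqxx.
Qed.
End Sel2.


Section CB.
Variables (F : fieldType) (n : nat).
Implicit Types U : {set 'I_n}.

Lemma selmxE U m (s : 'I_m -> 'I_n) :
  (forall c (r : 'I_m), ((c \in U) && (rk U c == r)) = (c == s r)) ->
  selmx F m U = \matrix_(c, r) (c == s r)%:R.
Proof. by move=> hs; apply/matrixP=> c r; rewrite !mxE -hs. Qed.

Lemma mul_sel p U m (s : 'I_m -> 'I_n) (M : 'M[F]_(p, n)) :
  (forall c (r : 'I_m), ((c \in U) && (rk U c == r)) = (c == s r)) ->
  M *m selmx F m U = \matrix_(i, r) M i (s r).
Proof.
move=> hs; rewrite (selmxE hs); apply/matrixP=> i r; rewrite !mxE.
rewrite (bigD1 (s r)) //= mxE eqxx mulr1 big1 ?addr0 // => c /negbTE nc.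
by rewrite mxE nc mulr0.
Qed.

Lemma sel_mul p U m (s : 'I_m -> 'I_n) (N : 'M[F]_(n, p)) :
  (forall c (r : 'I_m), ((c \in U) && (rk U c == r)) = (c == s r)) ->
  (selmx F m U)^T *m N = \matrix_(r, j) N (s r) j.
Proof.
move=> hs; rewrite (selmxE hs); apply/matrixP=> r j; rewrite !mxE.
rewrite (bigD1 (s r)) //= !mxE eqxx mul1r big1 ?addr0 // => c /negbTE nc.
by rewrite !mxE nc mul0r.
Qed.

Lemma sign_sq m (t : 'S_m) : (-1) ^+ t * (-1) ^+ t = 1 :> F.
Proof. by case: (odd_perm t); rewrite ?expr0 ?expr1 ?mulr1 ?mulrNN ?mulr1. Qed.

Lemma cauchy_binet m (M : 'M[F]_(m, n)) (N : 'M[F]_(n, m)) :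
  \det (M *m N) = \sum_(U in msubsets n m)
     \det (M *m selmx F m U) * \det ((selmx F m U)^T *m N).
Proof.
pose G (f : {ffun 'I_m -> 'I_n}) :=
  (\prod_i M i (f i)) * \det (\matrix_(i, j) N (f i) j).
have step1 : \det (M *m N) = \sum_f G f.
  rewrite /determinant.
  under eq_bigr => t _ do under eq_bigr => i _ do rewrite mxE.
  under eq_bigr => t _ do rewrite bigA_distr_bigA mulr_sumr.
  rewrite exchange_big /=; apply: eq_bigr => f _.
  rewrite /G /determinant mulr_sumr; apply: eq_bigr => t _.
  rewrite big_split /= mulrCA; congr (_ * (_ * _)).
  by apply: eq_bigr => i _; rewrite mxE.
rewrite step1 (partition_big (fun f : {ffun 'I_m -> 'I_n} => [set f i | i in 'I_m]) predT) //=.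
rewrite (bigID (fun U => U \in msubsets n m)) /=.
rewrite [X in _ + X]big1 ?addr0; last first.
  move=> U /negbTE; rewrite inE => nU; apply: big1 => f /eqP imf.
  rewrite /G.
  case: (boolP [exists i1, exists i2, (i1 != i2) && (f i1 == f i2)]).
    case/existsP=> i1 /existsP[i2 /andP[ne /eqP e]].
    rewrite (determinant_alternate ne) ?mulr0 // => j; by rewrite !mxE e.
  move=> nex; exfalso; move: nU.
  have : {in [set: 'I_m] &, injective f}.
    move=> i1 i2 _ _ e; apply/eqP; apply/negPn/negP=> ne.
    by move/negP: nex; apply; apply/existsP; exists i1; apply/existsP; exists i2; rewrite ne e eqxx.
  move/imset_injP/eqP; rewrite cardsT card_ord -imf => c.
  suff -> : [set f i | i : 'I_m] = [set f x | x in [set: 'I_m]] by rewrite c eqxx.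
  by apply/setP=> x; apply/imsetP/imsetP; case=> i _ ->; exists i.
apply: eq_bigr => U; rewrite inE => /eqP cU.
have [s [sU hs]] := sel_ex cU.
have sinj : injective s.
  move=> r1 r2 e; have h1 := hs (s r1) r1; have h2 := hs (s r1) r2.
  rewrite eqxx in h1; rewrite e eqxx in h2.
  case/andP: h1 => _ /eqP e1; case/andP: h2 => _ /eqP e2.
  by apply/val_inj; rewrite /= -e1 -e2 e.
have sim : s @: [set: 'I_m] = U.
  apply/eqP; rewrite eqEcard card_in_imset; last by move=> ? ? _ _; apply: sinj.
  rewrite cardsT card_ord cU leqnn andbT; apply/subsetP=> x /imsetP[r _ ->]; exact: sU.
have sonto : forall c, c \in U -> exists r, c = s r.
  by move=> c; rewrite -sim => /imsetP[r _ ->]; exists r.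
rewrite (mul_sel _ hs) (sel_mul _ hs).
set D := \det (\matrix_(r, j) N (s r) j).
pose h (t : 'S_m) : {ffun 'I_m -> 'I_n} := [ffun i => s (t i)].
have hdet t : \det (\matrix_(i, j) N (h t i) j) = (-1) ^+ t * D.
  have -> : \matrix_(i, j) N (h t i) j = row_perm t (\matrix_(r, j) N (s r) j).
    by apply/matrixP=> i j; rewrite !mxE ffunE.
  by rewrite row_permE det_mulmx det_perm.
have hinj : {in [set: 'S_m] &, injective h}.
  move=> t1 t2 _ _ e; apply/permP=> i; apply: sinj.
  by have := congr1 (fun f : {ffun 'I_m -> 'I_n} => f i) e; rewrite !ffunE.
have himg : h @: [set: 'S_m] = [set f : {ffun 'I_m -> 'I_n} | [set f i | i in 'I_m] == U].
  apply/setP=> f; rewrite inE; apply/imsetP/idP.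
    case=> t _ ->; apply/eqP/setP=> x; apply/imsetP/idP.
      by case=> i _ ->; rewrite ffunE sU.
    move=> xU; have [r ->] := sonto x xU; exists ((t^-1)%g r) => //.
    by rewrite ffunE permKV.
  move/eqP=> imf.
  have fU i : f i \in U by rewrite -imf; apply/imsetP; exists i.
  have [g hg] := @fin_all_exists _ (fun _ => 'I_m) (fun i r => f i = s r)
     (fun i => sonto _ (fU i)).
  have finj : {in [set: 'I_m] &, injective f}.
    apply/imset_injP; rewrite cardsT card_ord.
    suff -> : [set f x | x in [set: 'I_m]] = U by rewrite cU.
    by rewrite -imf; apply/setP=> x; apply/imsetP/imsetP; case=> i _ ->; exists i.
  have ginj : injective g.
    by move=> i1 i2 e; apply: finj; rewrite ?inE // !hg e.
  exists (perm ginj) => //; apply/ffunP => i; by rewrite ffunE permE hg.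
transitivity (\sum_(f in h @: [set: 'S_m]) G f).
  by apply: eq_bigl => f; rewrite himg inE.
rewrite big_imset //= /determinant mulr_suml; apply: eq_big => [t|t _]; first by rewrite inE.
rewrite /G hdet.
have -> : \prod_i M i (h t i) = \prod_i (\matrix_(i, r) M i (s r)) i (t i).
  by apply: eq_bigr => i _; rewrite ffunE mxE.
by rewrite mulrCA mulrA.
Qed.

End CB.


Section Comp.
Variables (F : fieldType) (n m : nat).
Local Notation p := (extdim n m).

Lemma det_row0 q (X : 'M[F]_q) r : (forall j, X r j = 0) -> \det X = 0.
Proof.
move=> h; rewrite /determinant big1 // => t _.
by rewrite (bigD1 r) //= h mul0r mulr0.
Qed.

Lemma subs_card (i : 'I_p) : #|subs i| = m.
Proof. by have := enum_valP i; rewrite /subs inE => /eqP. Qed.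

Lemma subs_inj : injective (@subs n m).
Proof. exact: enum_val_inj. Qed.

Lemma subs_diff (i j : 'I_p) : i != j -> exists c, c \in subs i /\ c \notin subs j.
Proof.
move=> ne; case: (boolP (subs i \subset subs j)) => [sub|].
  have : subs i == subs j by rewrite eqEcard sub !subs_card leqnn.
  by move/eqP/subs_inj/eqP; rewrite (negbTE ne).
by case/subsetPn=> c ci cj; exists c.
Qed.

Lemma det_sel_row (S T : {set 'I_n}) (A : 'M[F]_n) c :
  #|S| = m -> #|T| = m -> c \in S -> (forall u, u \in T -> A c u = 0) ->
  \det ((selmx F m S)^T *m A *m selmx F m T) = 0.
Proof.
move=> cS cT cs h.
have [s [sS hs]] := sel_ex cS; have [t [tT ht]] := sel_ex cT.
have [r er] := sel_onto cS hs cs.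
rewrite (sel_mul _ hs) (mul_sel _ ht); apply: (det_row0 (r := r)) => j.
by rewrite !mxE -er h.
Qed.

Lemma det_sel_col (S T : {set 'I_n}) (A : 'M[F]_n) u :
  #|S| = m -> #|T| = m -> u \in T -> (forall c, c \in S -> A c u = 0) ->
  \det ((selmx F m S)^T *m A *m selmx F m T) = 0.
Proof.
move=> cS cT ut h; rewrite -det_tr !trmx_mul trmxK mulmxA.
apply: (det_sel_row cT cS ut) => c cs; rewrite mxE; exact: h.
Qed.

Lemma compoundE (A : 'M[F]_n) i j :
  compound m A i j = \det ((selmx F m (subs i))^T *m A *m selmx F m (subs j)).
Proof. by rewrite mxE. Qed.

Lemma compoundM (A B : 'M[F]_n) :
  compound m (A *m B) = compound m A *m compound m B.
Proof.
apply/matrixP=> i j; rewrite !mxE -!mulmxA mulmxA cauchy_binet.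
rewrite (big_enum_val (fun U => _)) /=.
by apply: eq_bigr => l _; rewrite !mxE -!mulmxA.
Qed.

Lemma compound1 : compound m (1%:M : 'M[F]_n) = 1%:M.
Proof.
apply/matrixP=> i j; rewrite !mxE.
case: (eqVneq i j) => [<-|ne] /=.
  have [s [sS hs]] := sel_ex (subs_card i).
  have sinj : injective s.
    move=> r1 r2 e; have h1 := hs (s r1) r1; have h2 := hs (s r1) r2.
    rewrite eqxx in h1; rewrite e eqxx in h2.
    case/andP: h1 => _ /eqP e1; case/andP: h2 => _ /eqP e2.
    by apply/val_inj; rewrite /= -e1 -e2 e.
  rewrite (sel_mul _ hs) (mul_sel _ hs).
  transitivity (\det (1%:M : 'M[F]_m)); last exact: det1.
  congr (\det _); apply/matrixP=> r1 r2; by rewrite !mxE (inj_eq sinj).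
have [c [ci cj]] := subs_diff ne.
apply: (det_sel_row (subs_card i) (subs_card j) ci) => u uj.
by rewrite mxE; case: eqVneq => // e; rewrite e uj in cj.
Qed.

Lemma compound_unit (A : 'M[F]_n) : A \in unitmx -> compound m A \in unitmx.
Proof.
move=> uA; have := compoundM A (invmx A); rewrite mulmxV // compound1.
by move/esym/mulmx1_unit=> [].
Qed.

End Comp.


Section Key.
Variables (F : fieldType) (n m : nat).
Local Notation p := (extdim n m).

Lemma col_lemma q (X : 'M[F]_q) a b :
  (forall T, T != a -> X T b = 0) -> X *m delta_mx b a = X a b *: delta_mx a a.
Proof.
move=> h; apply/matrixP=> T U; rewrite [RHS]mxE [in RHS]mxE mxE.
rewrite (bigD1 b) //= big1 ?addr0; last first.
  by move=> l /negbTE nl; rewrite mxE nl mulr0.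
rewrite mxE eqxx /=; case: (eqVneq T a) => [->|ne] //=.
by rewrite h // mul0r mulr0.
Qed.

Lemma row_lemma q (X : 'M[F]_q) a b :
  (forall U, U != b -> X a U = 0) -> delta_mx a a *m X = X a b *: delta_mx a b.
Proof.
move=> h; apply/matrixP=> T U; rewrite [RHS]mxE [in RHS]mxE mxE.
rewrite (bigD1 a) //= big1 ?addr0; last first.
  by move=> l /negbTE nl; rewrite mxE nl andbF mul0r.
rewrite mxE eqxx andbT; case: (T == a) => /=; last by rewrite !mul0r mulr0.
rewrite !mul1r; case: (eqVneq U b) => [->|ne] /=; first by rewrite mulr1.
by rewrite h // mulr0.
Qed.

Lemma key (B B2 B' B2' : 'M[F]_n) (ix ix2 : 'I_p) :
  B \in unitmx -> B2 \in unitmx -> B' \in unitmx -> B2' \in unitmx ->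
  (forall r c, r \notin subs ix -> c \in subs ix2 -> (B *m invmx B2) r c = 0) ->
  (forall r c, r \in subs ix -> c \notin subs ix2 -> (B' *m invmx B2') r c = 0) ->
  exists2 c : F, c != 0 &
    invmx (compound m B) *m delta_mx ix ix *m compound m B' =
    c *: (invmx (compound m B2) *m delta_mx ix2 ix2 *m compound m B2').
Proof.
move=> uB uB2 uB' uB2' hA hA'.
set A := B *m invmx B2; set A' := B' *m invmx B2'.
have uA : A \in unitmx by rewrite unitmx_mul uB unitmx_inv uB2.
have uA' : A' \in unitmx by rewrite unitmx_mul uB' unitmx_inv uB2'.
set CA := compound m A; set CA' := compound m A'.
have CBe : compound m B = CA *m compound m B2 by rewrite -compoundM /A mulmxKV.
have CBe' : compound m B' = CA' *m compound m B2' by rewrite -compoundM /A' mulmxKV.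
have uCA : CA \in unitmx by apply: compound_unit.
have uCA' : CA' \in unitmx by apply: compound_unit.
have uCB2 : compound m B2 \in unitmx by apply: compound_unit.
have uCB : compound m B \in unitmx by apply: compound_unit.
have col : CA *m delta_mx ix2 ix = CA ix ix2 *: delta_mx ix ix.
  apply: col_lemma => T ne; rewrite /CA compoundE.
  have [c [cT cn]] := subs_diff ne.
  apply: (det_sel_row (subs_card T) (subs_card ix2) cT) => u uS; exact: hA.
have row : delta_mx ix ix *m CA' = CA' ix ix2 *: delta_mx ix ix2.
  apply: row_lemma => U ne; rewrite /CA' compoundE.
  have [u [uU un]] := subs_diff ne.
  apply: (det_sel_col (subs_card ix) (subs_card U) uU) => c cS; exact: hA'.
have a0 : CA ix ix2 != 0.
  apply/eqP=> e; move: col; rewrite e scale0r => /(congr1 (mulmx (invmx CA))).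
  rewrite mulKmx // mulmx0 => /matrixP /(_ ix2 ix); rewrite !mxE !eqxx /=.
  by move/eqP; rewrite oner_eq0.
have b0 : CA' ix ix2 != 0.
  apply/eqP=> e; move: row; rewrite e scale0r => /(congr1 (mulmx ^~ (invmx CA'))).
  rewrite mulmxK // mul0mx => /matrixP /(_ ix ix); rewrite !mxE !eqxx /=.
  by move/eqP; rewrite oner_eq0.
exists (CA' ix ix2 / CA ix ix2); first by rewrite mulf_neq0 // invr_eq0.
have iB2 : invmx (compound m B2) = invmx (compound m B) *m CA.
  by rewrite -[in RHS](mulmxK uCB2 CA) -CBe mulmxA mulVmx // mul1mx.
rewrite iB2 -!mulmxA scalemxAr; congr (_ *m _).
rewrite CBe' [LHS]mulmxA row -scalemxAl.
rewrite -(mul_delta_mx ix ix2 ix2) -mulmxA mulmxA col -scalemxAl mulmxA mul_delta_mx.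
by rewrite scalerA mulfVK.
Qed.

Lemma diag_adm (lab : 'I_n -> lbl) :
  diag_mx (\row_i (admissible lab (subs i))%:R) =
  \matrix_(i, j) ((i == j) && admissible lab (subs i))%:R :> 'M[F]_p.
Proof.
apply/matrixP=> i j; rewrite !mxE.
by case: (i == j); case: (admissible _ _); rewrite /= ?mulr1n ?mulr0n.
Qed.

Lemma lam_delta (B B' : 'M[F]_n) lab ix :
  (forall i, admissible lab (subs i) = (i == ix)) ->
  lambda_mx m B B' lab = invmx (compound m B) *m delta_mx ix ix *m compound m B'.
Proof.
move=> h; rewrite /lambda_mx diag_adm; congr (_ *m _ *m _).
apply/matrixP=> i j; rewrite !mxE h.
by case: (eqVneq i ix) => [->|ne]; rewrite ?eqxx ?andbT ?andbF ?(negbTE ne) // eq_sym.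
Qed.

Lemma lam_zero (B B' : 'M[F]_n) lab :
  (forall i : 'I_p, ~~ admissible lab (subs i)) -> lambda_mx m B B' lab = 0.
Proof.
move=> h; rewrite /lambda_mx diag_adm.
have -> : \matrix_(i, j) ((i == j) && admissible lab (subs i))%:R = 0 :> 'M[F]_p.
  by apply/matrixP=> i j; rewrite !mxE (negbTE (h i)) andbF.
by rewrite mulmx0 mul0mx.
Qed.

Lemma lam_nz (B B' : 'M[F]_n) lab (ix : 'I_p) :
  B \in unitmx -> B' \in unitmx -> admissible lab (subs ix) ->
  lambda_mx m B B' lab != 0.
Proof.
move=> uB uB' ad; apply/eqP=> e.
have uC := compound_unit m uB; have uC' := compound_unit m uB'.
move: e => /(congr1 (fun X => compound m B *m X *m invmx (compound m B'))).
rewrite /lambda_mx !mulmxA mulmxV // mul1mx mulmxK // mulmx0 mul0mx diag_adm.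
by move=> /matrixP /(_ ix ix); rewrite !mxE eqxx ad /= => /eqP; rewrite oner_eq0.
Qed.

Lemma lam_rank (B B' : 'M[F]_n) (ix : 'I_p) :
  B \in unitmx -> B' \in unitmx ->
  \rank (invmx (compound m B) *m delta_mx ix ix *m compound m B') = 1%N.
Proof.
move=> uB uB'; have uC := compound_unit m uB; have uC' := compound_unit m uB'.
rewrite mxrankMfree ?row_free_unit // eqmxMfull ?mxrank_delta //.
by rewrite row_full_unit unitmx_inv.
Qed.

End Key.


Section Proj.
Variables (F : fieldType) (n : nat).
Implicit Types X Y : {set 'I_n}.

Definition proj X : 'M[F]_n := diag_mx (\row_r (r \in X)%:R).

Lemma projE X i j : proj X i j = ((i == j) && (i \in X))%:R.
Proof.
by rewrite !mxE; case: (i == j); case: (i \in X); rewrite /= ?mulr1n ?mulr0n.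
Qed.

Lemma mulproj q X (A : 'M[F]_(q, n)) i j : (A *m proj X) i j = A i j * (j \in X)%:R.
Proof.
rewrite mxE (bigD1 j) //= big1 ?addr0; last first.
  by move=> l /negbTE nl; rewrite projE nl mulr0.
by rewrite projE eqxx.
Qed.

Lemma projM X Y : proj X *m proj Y = proj (X :&: Y).
Proof.
apply/matrixP=> i j; rewrite mulproj !projE inE.
case: (eqVneq i j) => [<-|] /=; last by rewrite mul0r.
by case: (i \in X); case: (i \in Y); rewrite /= ?mulr1 ?mulr0.
Qed.

Lemma proj0 : proj set0 = 0.
Proof. by apply/matrixP=> i j; rewrite projE inE andbF mxE. Qed.

Lemma selTsel X : (selmx F #|X| X)^T *m selmx F #|X| X = 1%:M.
Proof.
have [s [sS hs]] := sel_ex (erefl #|X|).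
have sinj : injective s.
  move=> r1 r2 e; have h1 := hs (s r1) r1; have h2 := hs (s r1) r2.
  rewrite eqxx in h1; rewrite e eqxx in h2.
  case/andP: h1 => _ /eqP e1; case/andP: h2 => _ /eqP e2.
  by apply/val_inj; rewrite /= -e1 -e2 e.
rewrite (sel_mul _ hs) (selmxE F hs); apply/matrixP=> r1 r2; rewrite !mxE.
by rewrite (inj_eq sinj).
Qed.

Lemma proj_sel X : proj X = selmx F #|X| X *m (selmx F #|X| X)^T.
Proof.
have [s [sS hs]] := sel_ex (erefl #|X|).
have sinj : injective s.
  move=> r1 r2 e; have h1 := hs (s r1) r1; have h2 := hs (s r1) r2.
  rewrite eqxx in h1; rewrite e eqxx in h2.
  case/andP: h1 => _ /eqP e1; case/andP: h2 => _ /eqP e2.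
  by apply/val_inj; rewrite /= -e1 -e2 e.
rewrite (selmxE F hs); apply/matrixP=> i j; rewrite projE !mxE.
case: (boolP (i \in X)) => iX.
  have [r0 e] := sel_onto (erefl _) hs iX.
  rewrite (bigD1 r0) //= big1 ?addr0.
    by rewrite !mxE -e eqxx mul1r andbT eq_sym.
  move=> r nr; rewrite !mxE e (inj_eq sinj) eq_sym (negbTE nr); exact: mul0r.
rewrite andbF big1 // => r _; rewrite !mxE.
suff -> : (i == s r) = false by rewrite mul0r.
by apply/negbTE; apply: contra iX => /eqP ->.
Qed.

Lemma rank_proj X (B : 'M[F]_n) : B \in unitmx -> \rank (proj X *m B) = #|X|.
Proof.
move=> uB; rewrite proj_sel -mulmxA; set S := selmx F #|X| X.
have r1 : \rank (S^T *m B) = #|X|.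
  rewrite mxrankMfree ?row_free_unit //; apply/eqP; rewrite eqn_leq rank_leq_row /=.
  by rewrite -{1}(mxrank1 F #|X|) -(selTsel X) mxrankM_maxl.
apply/eqP; rewrite eqn_leq; apply/andP; split.
  by apply: leq_trans (mxrankM_maxr _ _) _; rewrite r1.
by have := mxrankM_maxr S^T (S *m (S^T *m B)); rewrite mulmxA selTsel mul1mx r1.
Qed.

End Proj.


Section Rel.
Variables (F : fieldType) (n : nat).
Implicit Types P : 'M[F]_(n + n).

Lemma rowP_split P (u : 'rV[F]_(n + n)) :
  u *m P = row_mx (u *m lsubmx P) (u *m rsubmx P).
Proof. by rewrite -mul_mx_row hsubmxK. Qed.

Lemma memKer P (v : 'rV[F]_n) : (v <= KerMx P)%MS = (row_mx v 0 <= P)%MS.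
Proof.
apply/idP/idP.
  case/submxP => w ->; rewrite /KerMx mulmxA; set u := w *m kermx (rsubmx P).
  have u0 : u *m rsubmx P = 0 by rewrite /u -mulmxA mulmx_ker mulmx0.
  by rewrite -u0 -rowP_split submxMl.
case/submxP => u; rewrite rowP_split => /eq_row_mx [ev /esym e0].
rewrite ev; move/sub_kermxP: e0 => /submxP [w ->]; rewrite /KerMx -mulmxA; exact: submxMl.
Qed.

Lemma memIndef P (v : 'rV[F]_n) : (v <= IndefMx P)%MS = (row_mx 0 v <= P)%MS.
Proof.
apply/idP/idP.
  case/submxP => w ->; rewrite /IndefMx mulmxA; set u := w *m kermx (lsubmx P).
  have u0 : u *m lsubmx P = 0 by rewrite /u -mulmxA mulmx_ker mulmx0.
  by rewrite -u0 -rowP_split submxMl.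
case/submxP => u; rewrite rowP_split => /eq_row_mx [/esym e0 ev].
rewrite ev; move/sub_kermxP: e0 => /submxP [w ->]; rewrite /IndefMx -mulmxA; exact: submxMl.
Qed.

Lemma memDom P (v : 'rV[F]_n) : (v <= DomMx P)%MS <-> exists w, (row_mx v w <= P)%MS.
Proof.
split.
  case/submxP => u ->; exists (u *m rsubmx P); rewrite -rowP_split; exact: submxMl.
case=> w /submxP [u]; rewrite rowP_split => /eq_row_mx [-> _]; exact: submxMl.
Qed.

Lemma memIm P (w : 'rV[F]_n) : (w <= ImMx P)%MS <-> exists v, (row_mx v w <= P)%MS.
Proof.
split.
  case/submxP => u ->; exists (u *m lsubmx P); rewrite -rowP_split; exact: submxMl.
case=> v /submxP [u]; rewrite rowP_split => /eq_row_mx [_ ->]; exact: submxMl.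
Qed.

Lemma memEq P (N N' : 'M[F]_n) : (P :=: row_mx N N')%MS ->
  forall v w, (row_mx v w <= P)%MS <-> exists c : 'rV_n, v = c *m N /\ w = c *m N'.
Proof.
move=> eP v w; rewrite eP; split.
  by case/submxP=> c; rewrite mul_mx_row => /eq_row_mx [-> ->]; exists c.
by case=> c [-> ->]; rewrite -mul_mx_row submxMl.
Qed.

Lemma memQ (K I : 'M[F]_(n + n, n)) (v w : 'rV[F]_n) :
  (row_mx v w <= (row_mx K 0 + row_mx 0 I))%MS = (v <= K)%MS && (w <= I)%MS.
Proof.
apply/idP/idP.
  case/sub_addsmxP=> [[a b]] /=; rewrite !mul_mx_row !mulmx0 add_row_mx add0r addr0.
  by case/eq_row_mx => -> ->; rewrite !submxMl.
case/andP=> /submxP [a ->] /submxP [b ->]; apply/sub_addsmxP; exists (a, b) => /=.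
by rewrite !mul_mx_row !mulmx0 add_row_mx add0r addr0.
Qed.

Lemma eqmx_mem m1 m2 (A : 'M[F]_(m1, n)) (B : 'M[F]_(m2, n)) :
  (forall v : 'rV_n, (v <= A)%MS = (v <= B)%MS) -> (A :=: B)%MS.
Proof.
move=> h; apply/eqmxP/andP; split; apply/row_subP=> i.
  by rewrite -h row_sub.
by rewrite h row_sub.
Qed.

End Rel.


Section Adapted.
Variables (F : fieldType) (n : nat).
Implicit Types P : 'M[F]_(n + n).
Implicit Types X Y : {set 'I_n}.

Definition Fs (lab : 'I_n -> lbl) := [set r | lbl_eqb (lab r) Lf].
Definition Hs (lab : 'I_n -> lbl) := [set r | lbl_eqb (lab r) Lh].

Lemma FH_disj lab : Fs lab :&: Hs lab = set0.
Proof. by apply/setP=> r; rewrite !inE; case: (lab r). Qed.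

Lemma projM_entry X (B : 'M[F]_n) i j : (proj F X *m B) i j = (i \in X)%:R * B i j.
Proof.
rewrite mxE (bigD1 i) //= big1 ?addr0; last first.
  by move=> l /negbTE nl; rewrite projE eq_sym nl mul0r.
by rewrite projE eqxx.
Qed.

Lemma eqmx_eqr m1 m2 k (A : 'M[F]_(m1, k)) (B C : 'M[F]_(m2, k)) :
  (A :=: B)%MS -> B = C -> (A :=: C)%MS.
Proof. by move=> e <-. Qed.

Lemma adapted_row P B B' lab : adapted P B B' lab ->
  (P :=: row_mx (proj F (~: Fs lab) *m B) (proj F (~: Hs lab) *m B'))%MS.
Proof.
case=> _ _ /eqmxP e; apply: (eqmx_eqr e).
apply/row_matrixP => r; rewrite rowK row_row_mx.
have rp X (C : 'M[F]_n) : row r (proj F X *m C) = if r \in X then row r C else 0.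
  apply/rowP=> j; rewrite [LHS]mxE projM_entry.
  by case: (r \in X); rewrite ?mul1r ?mul0r !mxE.
by rewrite !rp !inE; case: (lab r).
Qed.


Lemma coefA X Y (B B' : 'M[F]_n) (v : 'rV[F]_n) :
  B' \in unitmx -> X :&: Y = set0 ->
  (exists c : 'rV_n, v = c *m (proj F (~: X) *m B) /\ 0 = c *m (proj F (~: Y) *m B'))
  <-> (v <= proj F Y *m B)%MS.
Proof.
move=> uB' dXY; split.
  case=> c [-> /esym e0].
  have c0 : c *m proj F (~: Y) = 0.
    by move: (congr1 (mulmx^~ (invmx B')) e0); rewrite mulmxA mulmxK // mul0mx.
  rewrite mulmxA.
  have -> : c *m proj F (~: X) = c *m proj F Y.
    apply/matrixP=> i j; rewrite !mulproj.
    have := congr1 (fun M : 'rV_n => M i j) c0; rewrite mulproj mxE !inE.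
    case jY: (j \in Y) => /=.
      have jX : j \in X = false.
        by apply/negbTE/negP=> jX; move/setP: dXY => /(_ j); rewrite !inE jX jY.
      by rewrite jX.
    by rewrite mulr1 => ->; rewrite !mul0r.
  by rewrite -mulmxA submxMl.
case/submxP=> w ->; exists (w *m proj F Y); split.
  have e : proj F Y *m proj F (~: X) = proj F Y.
    rewrite projM; congr proj.
    apply/setP=> j; rewrite !inE; case jY: (j \in Y); rewrite ?andbF //=.
    by apply/negP=> jX; move/setP: dXY => /(_ j); rewrite !inE jX jY.
  by rewrite [RHS]mulmxA -(mulmxA w) e mulmxA.
by rewrite mulmxA -(mulmxA w) projM setICr proj0 mulmx0 mul0mx.
Qed.

Lemma ad_Ker P B B' lab : adapted P B B' lab -> (KerMx P :=: proj F (Hs lab) *m B)%MS.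
Proof.
move=> h; have eP := adapted_row h; case: h => uB uB' _.
apply: eqmx_mem => v; rewrite memKer; apply/idP/idP.
  by move/(memEq eP)=> [c [e1 e2]]; apply/(coefA _ _ uB' (FH_disj lab)); exists c.
by move/(coefA _ _ uB' (FH_disj lab))=> [c [e1 e2]]; apply/(memEq eP); exists c.
Qed.

Lemma ad_Indef P B B' lab : adapted P B B' lab -> (IndefMx P :=: proj F (Fs lab) *m B')%MS.
Proof.
move=> h; have eP := adapted_row h; case: h => uB uB' _.
have d : Hs lab :&: Fs lab = set0 by rewrite setIC FH_disj.
apply: eqmx_mem => v; rewrite memIndef; apply/idP/idP.
  by move/(memEq eP)=> [c [e1 e2]]; apply/(coefA _ _ uB d); exists c.
by move/(coefA _ _ uB d)=> [c [e1 e2]]; apply/(memEq eP); exists c.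
Qed.

Lemma ad_Dom P B B' lab : adapted P B B' lab -> (DomMx P :=: proj F (~: Fs lab) *m B)%MS.
Proof.
move=> h; have eP := adapted_row h; case: h => uB uB' _.
apply: eqmx_mem => v; apply/idP/idP.
  by move/memDom=> [w /(memEq eP) [c [-> _]]]; exact: submxMl.
case/submxP=> w ->; apply/memDom; exists (w *m (proj F (~: Hs lab) *m B')).
by apply/(memEq eP); exists w.
Qed.

Lemma ad_Im P B B' lab : adapted P B B' lab -> (ImMx P :=: proj F (~: Hs lab) *m B')%MS.
Proof.
move=> h; have eP := adapted_row h; case: h => uB uB' _.
apply: eqmx_mem => v; apply/idP/idP.
  by move/memIm=> [w /(memEq eP) [c [_ ->]]]; exact: submxMl.
case/submxP=> w ->; apply/memIm; exists (w *m (proj F (~: Fs lab) *m B)).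
by apply/(memEq eP); exists w.
Qed.

Lemma admE lab S : admissible lab S = (Fs lab \subset S) && (S \subset ~: Hs lab).
Proof.
rewrite /admissible; congr (_ && _).
  apply/forallP/subsetP => h r.
    by rewrite inE => /(implyP (h r)).
  by apply/implyP => a; apply: h; rewrite inE.
apply/forallP/subsetP => h r.
  by rewrite !inE; apply: contraL => a; exact: (implyP (h r)).
by apply/implyP => a; apply/negP => rS; have := h r rS; rewrite !inE a.
Qed.

End Adapted.


Section Help.
Variables (F : fieldType) (n m : nat).
Implicit Types P : 'M[F]_(n + n).

Lemma cardCn (X : {set 'I_n}) : #|~: X| = (n - #|X|)%N.
Proof. have := cardsC X; rewrite card_ord; lia. Qed.

Lemma ad_ranks P B B' lab : adapted P B B' lab ->
  [/\ \rank (IndefMx P) = #|Fs lab|, \rank (DomMx P) = (n - #|Fs lab|)%N,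
      \rank (KerMx P) = #|Hs lab|, \rank (ImMx P) = (n - #|Hs lab|)%N &
      (#|Fs lab| + #|Hs lab| <= n)%N].
Proof.
move=> h; have [uB uB' _] := h.
rewrite (ad_Indef h) (ad_Dom h) (ad_Ker h) (ad_Im h) !rank_proj // !cardCn; split => //.
rewrite -cardsUI FH_disj cards0 addn0.
by have := max_card (mem (Fs lab :|: Hs lab)); rewrite card_ord.
Qed.

Lemma sub_card (T : finType) (A : {set T}) (d : nat) :
  (d <= #|A|)%N -> exists C : {set T}, C \subset A /\ #|C| = d.
Proof.
elim: d => [|d IH] hd; first by exists (set0 : {set T}); rewrite sub0set cards0.
have [C [CA cC]] := IH (ltnW hd).
have : (0 < #|A :\: C|)%N by rewrite cardsD (setIidPr CA) cC subn_gt0.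
case/card_gt0P=> x; rewrite inE => /andP[xC xA].
exists (x |: C); split; first by rewrite subUset sub1set xA.
by rewrite cardsU1 xC cC.
Qed.

Lemma idx_of (S : {set 'I_n}) : #|S| = m -> exists ix : 'I_(extdim n m), subs ix = S.
Proof.
move=> cS; have Sin : S \in msubsets n m by rewrite inE cS.
by exists (enum_rank_in Sin S); rewrite /subs enum_rankK_in.
Qed.

Lemma adm_ex lab :
  (exists i : 'I_(extdim n m), admissible lab (subs i)) <->
  (#|Fs lab| <= m <= n - #|Hs lab|)%N.
Proof.
split.
  case=> i; rewrite admE => /andP[s1 s2].
  by rewrite -cardCn -(subs_card i) !subset_leq_card.
case/andP=> h1 h2.
have FH : Fs lab \subset ~: Hs lab.
  by apply/subsetP=> r; rewrite !inE; case: (lab r).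
have [C [CA cC]] : exists C : {set 'I_n}, C \subset (~: Hs lab) :\: Fs lab /\ #|C| = (m - #|Fs lab|)%N.
  by apply: sub_card; rewrite cardsD (setIidPr FH) cardCn leq_sub2r.
have [ix e] : exists ix : 'I_(extdim n m), subs ix = Fs lab :|: C.
  apply: idx_of; rewrite cardsU cC.
  have -> : Fs lab :&: C = set0.
    apply/setP=> r; rewrite !inE; apply/negP=> /andP[rF rC].
    by move/subsetP: CA => /(_ r rC); rewrite !inE rF.
  by rewrite cards0 subn0 subnKC.
exists ix; rewrite admE e subsetUl /= subUset FH /=.
by apply: subset_trans CA _; apply: subsetDl.
Qed.

Lemma lam_nz_iff P B B' lab : adapted P B B' lab ->
  (lambda_mx m B B' lab != 0) = (#|Fs lab| <= m <= n - #|Hs lab|)%N.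
Proof.
case=> uB uB' _; apply/idP/idP.
  move=> h; apply/(adm_ex lab); apply/existsP; apply: contraNT h.
  move/existsPn=> h; rewrite lam_zero //.
by case/(adm_ex lab)=> i ai; exact: lam_nz uB uB' ai.
Qed.

Lemma lam_uniq lab (S : {set 'I_n}) (B B' : 'M[F]_n) :
  #|S| = m -> admissible lab S ->
  (forall T : {set 'I_n}, #|T| = m -> admissible lab T -> T = S) ->
  exists ix : 'I_(extdim n m), subs ix = S /\
    lambda_mx m B B' lab = invmx (compound m B) *m delta_mx ix ix *m compound m B'.
Proof.
move=> cS aS uS; have [ix e] := idx_of cS; exists ix; split => //.
apply: lam_delta => i; apply/idP/eqP.
  by move=> ai; apply: subs_inj; rewrite e; apply: uS => //; exact: subs_card.
by move=> ->; rewrite e.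
Qed.

Lemma row_proj_sub (X : {set 'I_n}) (B : 'M[F]_n) r :
  r \in X -> (row r B <= proj F X *m B)%MS.
Proof.
move=> rX; have -> : row r B = row r (proj F X *m B).
  by apply/rowP=> j; rewrite [RHS]mxE projM_entry rX mul1r mxE.
exact: row_sub.
Qed.

Lemma zero_entry (B B2 : 'M[F]_n) (X : {set 'I_n}) r c :
  B2 \in unitmx -> (row r B <= proj F X *m B2)%MS -> c \notin X ->
  (B *m invmx B2) r c = 0.
Proof.
move=> u /submxP [w e] cX.
have : row r (B *m invmx B2) = w *m proj F X by rewrite row_mul e !mulmxA mulmxK.
move/rowP/(_ c); rewrite [LHS]mxE [RHS]mulproj (negbTE cX) mulr0; exact.
Qed.

End Help.


Section Q.
Variables (F : fieldType) (n m : nat).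
Implicit Types P : 'M[F]_(n + n).

Lemma Q_Dom P : (DomMx (KerImRel P) :=: KerMx P)%MS.
Proof.
apply: eqmx_mem => v; apply/idP/idP.
  by case/memDom=> w; rewrite /KerImRel memQ => /andP[].
by move=> h; apply/memDom; exists 0; rewrite /KerImRel memQ h sub0mx.
Qed.

Lemma Q_Indef P : (IndefMx (KerImRel P) :=: ImMx P)%MS.
Proof. by apply: eqmx_mem => v; rewrite memIndef /KerImRel memQ sub0mx. Qed.

Lemma lam_lo lab (B B' : 'M[F]_n) : #|Fs lab| = m ->
  exists ix : 'I_(extdim n m), subs ix = Fs lab /\
    lambda_mx m B B' lab = invmx (compound m B) *m delta_mx ix ix *m compound m B'.
Proof.
move=> cF; apply: lam_uniq => //.
  rewrite admE subxx /=; apply/subsetP=> r; rewrite !inE; by case: (lab r).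
move=> T cT; rewrite admE => /andP[FT _]; apply/esym/eqP.
by rewrite eqEcard FT cT cF leqnn.
Qed.

Lemma lam_hi lab (B B' : 'M[F]_n) : #|~: Hs lab| = m ->
  exists ix : 'I_(extdim n m), subs ix = ~: Hs lab /\
    lambda_mx m B B' lab = invmx (compound m B) *m delta_mx ix ix *m compound m B'.
Proof.
move=> cH; apply: lam_uniq => //.
  rewrite admE subxx andbT; apply/subsetP=> r; rewrite !inE; by case: (lab r).
move=> T cT; rewrite admE => /andP[_ TH]; apply/eqP.
by rewrite eqEcard TH cT cH leqnn.
Qed.

End Q.

Theorem main_gen (F : fieldType) (n k m : nat)
    (P : nat -> 'M[F]_(n + n))
    (L : nat -> 'M[F]_(extdim n m)) (LQ : nat -> 'M[F]_(extdim n m)) :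
  hinge k P ->
  (m <= n)%N ->
  (forall j, (1 <= j <= k)%N -> is_lambda m (P j) (L j)) ->
  (forall j, (1 <= j <= k)%N -> is_lambda m (KerImRel (P j)) (LQ j)) ->
  let C1 :=
    exists j, [/\ (1 <= j <= k)%N, L j != 0 &
      forall t, (1 <= t <= k)%N -> L t != 0 -> t = j] in
  let C2 :=
    exists j, [/\ (1 <= j)%N /\ (j.+1 <= k)%N, L j != 0 /\ L j.+1 != 0,
      (forall t, (1 <= t <= k)%N -> t <> j -> t <> j.+1 -> L t = 0),
      \rank (L j) = 1%N /\ \rank (L j.+1) = 1%N &
      proportional (L j) (L j.+1) /\ proportional (L j) (LQ j)] in
  (C1 /\ ~ C2) \/ (~ C1 /\ C2).
Proof.
move=> [hk hr hKD hD1 hIk] hm hL hLQ C1 C2.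
pose a j := \rank (IndefMx (P j)); pose b j := rkrel (P j).
have nzE : forall j, (1 <= j <= k)%N -> (L j != 0) = nz a b m j.
  move=> j hj; have [B [B' [lab [ad ->]]]] := hL j hj.
  have [r1 r2 r3 r4 r5] := ad_ranks ad.
  rewrite (lam_nz_iff m ad) /nz /a /b /rkrel r1 r2 r3.
  move: (#|Fs lab|) (#|Hs lab|) r5 => f h r5.
  by have -> : (f + (n - f - h) = n - h)%N by lia.
have a1 : a 1%N = 0%N.
  have [B [B' [lab [ad _]]]] := hL 1%N (ltac:(by rewrite hk) : (1 <= 1 <= k)%N).
  have [r1 r2 r3 r4 r5] := ad_ranks ad.
  move: hD1; rewrite /row_full r2 /a r1.
  move: (#|Fs lab|) (#|Hs lab|) r5 => f h r5 /eqP; lia.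
have astep : forall j, (1 <= j)%N -> (j < k)%N -> a j.+1 = (a j + b j)%N.
  move=> j j1 jk.
  have [B [B' [lab [ad _]]]] := hL j (ltac:(rewrite j1 ltnW //) : (1 <= j <= k)%N).
  have [B2 [B2' [lab2 [ad2 _]]]] := hL j.+1 (ltac:(rewrite jk //) : (1 <= j.+1 <= k)%N).
  have [r1 r2 r3 r4 r5] := ad_ranks ad.
  have [s1 s2 s3 s4 s5] := ad_ranks ad2.
  have [e _] := hKD j j1 jk; move/eqmx_rank: e; rewrite r3 s2.
  rewrite /a /b /rkrel r1 r2 r3 s1.
  move: (#|Fs lab|) (#|Hs lab|) (#|Fs lab2|) (#|Hs lab2|) r5 s5 => f h f2 h2 r5 s5.
  lia.
have ak : (m <= a k + b k)%N.
  have [B [B' [lab [ad _]]]] := hL k (ltac:(rewrite hk leqnn //) : (1 <= k <= k)%N).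
  have [r1 r2 r3 r4 r5] := ad_ranks ad.
  move: hIk; rewrite /row_full r4 /a /b /rkrel r1 r2 r3.
  move: (#|Fs lab|) (#|Hs lab|) r5 => f h r5 /eqP; lia.
have bpos : forall j, (1 <= j <= k)%N -> (0 < b j)%N.
  by move=> j hj; have [] := hr j hj.
have C12 : C1 -> ~ C2.
  case=> j [hj nj uj] [j' [[h1 h2] [n1 n2] _ _ _]].
  have e1 : j' = j by apply: uj => //; lia.
  have e2 : j'.+1 = j by apply: uj => //; lia.
  lia.
case: (comb hk a1 astep ak bpos).
  case=> j [hj nj uj].
  have c1 : C1.
    exists j; split => //; first by rewrite nzE.
    by move=> t ht; rewrite nzE // => /uj; apply.
  by left; split => //; exact: C12 c1.
case=> j [j1 jk nj nj1 uj]; suff c2 : C2 by right; split => // c1; exact: C12 c1 c2.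
have hj : (1 <= j <= k)%N by rewrite j1 ltnW.
have hj1 : (1 <= j.+1 <= k)%N by rewrite jk.
have em : m = a j.+1 /\ m = (a j + b j)%N.
  move: nj nj1; rewrite /nz (astep j j1 jk) => /andP[_ h1] /andP[h2 _]; lia.
case: em => em1 em2.
have [B1 [B1' [lab1 [ad1 eL1]]]] := hL j hj.
have [B2 [B2' [lab2 [ad2 eL2]]]] := hL j.+1 hj1.
have [Bq [Bq' [labq [adq eLQ]]]] := hLQ j hj.
have [r1 r2 r3 r4 r5] := ad_ranks ad1.
have [s1 s2 s3 s4 s5] := ad_ranks ad2.
have [q1 q2 q3 q4 q5] := ad_ranks adq.
have [uB1 uB1' _] := ad1; have [uB2 uB2' _] := ad2; have [uBq uBq' _] := adq.
have cH1 : #|~: Hs lab1| = m.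
  rewrite cardCn.
  rewrite em2 /a /b /rkrel r1 r2 r3.
  move: (#|Fs lab1|) (#|Hs lab1|) r5 => f h r5; lia.
have cF2 : #|Fs lab2| = m by rewrite -s1 em1.
have cFq : #|Fs labq| = m by rewrite -q1 (eqmx_rank (introT eqmxP (Q_Indef _))) r4 -cardCn.
have [ix [eix eL1']] := lam_hi B1 B1' cH1.
have [ix2 [eix2 eL2']] := lam_lo B2 B2' cF2.
have [iq [eiq eLQ']] := lam_lo Bq Bq' cFq.
exists j; split => //.
- by rewrite !nzE.
- move=> t ht tj tj1; case: (eqVneq (L t) 0) => // ne; exfalso.
  by move: ne; rewrite nzE // => /(uj t ht) [].
- by rewrite eL1 eL2 eL1' eL2' !lam_rank.
have [KD ID] := hKD j j1 jk.
have hKer : forall r, r \in Hs lab1 -> (row r B1 <= KerMx (P j))%MS.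
  by move=> r rH; rewrite (ad_Ker ad1); exact: row_proj_sub.
have hIm : forall r, r \in ~: Hs lab1 -> (row r B1' <= ImMx (P j))%MS.
  by move=> r rH; rewrite (ad_Im ad1); exact: row_proj_sub.
split.
  have hi : forall r c, r \notin subs ix -> c \in subs ix2 -> (B1 *m invmx B2) r c = 0.
    move=> r c; rewrite eix eix2 inE negbK => rH cF.
    apply: (zero_entry (X := ~: Fs lab2)) => //; last by rewrite inE cF.
    by rewrite -(ad_Dom ad2); apply: submx_trans (hKer r rH) _; case/andP: KD.
  have hii : forall r c, r \in subs ix -> c \notin subs ix2 -> (B1' *m invmx B2') r c = 0.
    move=> r c; rewrite eix eix2 => rH cF.
    apply: (zero_entry (X := Fs lab2)) => //.
    by rewrite -(ad_Indef ad2); apply: submx_trans (hIm r rH) _; case/andP: ID.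
  have [c c0 e] := key uB1 uB2 uB1' uB2' hi hii; exists c; split => //.
  by rewrite eL1 eL2 eL1' eL2'.
have hi : forall r c, r \notin subs ix -> c \in subs iq -> (B1 *m invmx Bq) r c = 0.
  move=> r c; rewrite eix eiq inE negbK => rH cF.
  apply: (zero_entry (X := ~: Fs labq)) => //; last by rewrite inE cF.
  by rewrite -(ad_Dom adq) Q_Dom; exact: hKer.
have hii : forall r c, r \in subs ix -> c \notin subs iq -> (B1' *m invmx Bq') r c = 0.
  move=> r c; rewrite eix eiq => rH cF.
  apply: (zero_entry (X := Fs labq)) => //.
  by rewrite -(ad_Indef adq) Q_Indef; exact: hIm.
have [c c0 e] := key uB1 uBq uB1' uBq' hi hii; exists c; split => //.
by rewrite eL1 eLQ eL1' eLQ'.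
Qed.

Unset Implicit Arguments.
Theorem theorem2p4 (R : realType) (n k m : nat)
    (P : nat -> 'M[R[i]]_(n + n))
    (L : nat -> 'M[R[i]]_(extdim n m)) (LQ : nat -> 'M[R[i]]_(extdim n m)) :
  hinge k P ->
  (m <= n)%N ->
  (forall j, (1 <= j <= k)%N -> is_lambda m (P j) (L j)) ->
  (forall j, (1 <= j <= k)%N -> is_lambda m (KerImRel (P j)) (LQ j)) ->
  let C1 :=
    exists j, [/\ (1 <= j <= k)%N, L j != 0 &
      forall t, (1 <= t <= k)%N -> L t != 0 -> t = j] in
  let C2 :=
    exists j, [/\ (1 <= j)%N /\ (j.+1 <= k)%N, L j != 0 /\ L j.+1 != 0,
      (forall t, (1 <= t <= k)%N -> t <> j -> t <> j.+1 -> L t = 0),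
      \rank (L j) = 1%N /\ \rank (L j.+1) = 1%N &
      proportional (L j) (L j.+1) /\ proportional (L j) (LQ j)] in
  (C1 /\ ~ C2) \/ (~ C1 /\ C2).
Proof. exact: main_gen. Qed.
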